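(* Let $\pi=(\pi_n^{n+1}\colon(X_{n+1},f_{n+1})\to(X_n,f_n))_{n\ge1}$ be an inverse sequence of equivariant maps and let $(X,f)=\lim_\pi(X_n,f_n)$. Let $\mathcal{C}_\pi=\{(C_n)_{n\ge1}\in\prod_{n\ge1}\mathcal{C}(f_n):\pi_n^{n+1}(C_{n+1})\subset C_n\ \forall n\ge1\}$ and, for $C_\ast=(C_n)_{n\ge1}\in\mathcal{C}_\pi$, $[C_\ast]=\{x=(x_n)_{n\ge1}\in X:x_n\in C_n\ \forall n\ge1\}$. Then $\mathcal{C}(f)=\{[C_\ast]:C_\ast\in\mathcal{C}_\pi\}$.
   Context: Each $X_n$ is a compact metric space, $f_n$ a continuous self-map, $\pi_n^{n+1}\colon X_{n+1}\to X_n$ continuous with $f_n\circ\pi_n^{n+1}=\pi_n^{n+1}\circ f_{n+1}$. $X=\{(x_n)\in\prod_n X_n:\pi_n^{n+1}(x_{n+1})=x_n\ \forall n\}$ with the product topology and $f((x_n))=(f_n(x_n))$. For a continuous map $g$ of a compact metric space $(Y,d)$: a $\delta$-chain is a finite sequence $(y_i)_{i=0}^k$, $k>0$, with $d(g(y_i),y_{i+1})\le\delta$; write $y\to_{g,\delta}z$ if one exists from $y$ to $z$; $CR(g)=\{y:y\to_{g,\delta}y\ \forall\delta>0\}$; for $y,z\in CR(g)$, $y\leftrightarrow_g z$ iff $y\to_{g,\delta}z$ and $z\to_{g,\delta}y$ for all $\delta>0$; the equivalence classes of $\leftrightarrow_g$ are the chain components, and $\mathcal{C}(g)$ is the set of chain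 components. *)

(* Defs.v *)
From HB Require Import structures.
From mathcomp Require Import all_boot all_order all_algebra.
From mathcomp Require Import all_classical all_reals all_analysis.
Set Implicit Arguments. Unset Strict Implicit. Unset Printing Implicit Defensive.
Import Order.TTheory GRing.Theory Num.Theory.
Local Open Scope classical_set_scope.
Local Open Scope ring_scope.

(* Chain notions for a map g : Y -> Y on a (pseudo)metric space, restricted to
   a phase space S ⊆ Y (the dynamics g is considered on S, with the metric of
   Y restricted to S).  [ball a δ b] means "d(a,b) < δ". *)
Section Chains.
Context {R : realType} {Y : pseudoMetricType R}.
Variables (S : set Y) (g : Y -> Y).

Definition dchain (delta : R) (y z : Y) : Prop :=
  exists k : nat, (0 < k)%N /\ exists s : nat -> Y,
    [/\ s 0%N = y, s k = z, (forall i, (i <= k)%N -> S (s i)) &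
        (forall i, (i < k)%N -> ball (g (s i)) delta (s i.+1))].

Definition chain_rec : set Y :=
  [set y | S y /\ forall delta : R, 0 < delta -> dchain delta y y].

Definition chain_equiv (y z : Y) : Prop :=
  [/\ chain_rec y, chain_rec z &
      forall delta : R, 0 < delta -> dchain delta y z /\ dchain delta z y].

Definition chain_component (C : set Y) : Prop :=
  exists y, chain_rec y /\ C = [set z | chain_equiv y z].

End Chains.

Definition inv_lim {R : realType} (X : nat -> metricType R)
  (pi : forall n, X n.+1 -> X n) : set (prod_topology X) :=
  [set x | forall n, pi n (x n.+1) = x n].

Definition lim_map {R : realType} (X : nat -> metricType R)
  (f : forall n, X n -> X n) : prod_topology X -> prod_topology X :=
  fun x n => f n (x n).

Definition C_pi {R : realType} (X : nat -> metricType R)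
  (f : forall n, X n -> X n) (pi : forall n, X n.+1 -> X n)
  (C : forall n, set (X n)) : Prop :=
  (forall n, chain_component [set: X n] (f n) (C n)) /\
  (forall n, pi n @` C n.+1 `<=` C n).

Definition thread_set {R : realType} (X : nat -> metricType R)
  (pi : forall n, X n.+1 -> X n) (C : forall n, set (X n)) : set (prod_topology X) :=
  [set x | inv_lim pi x /\ forall n, C n (x n)].

(* Main.v *)
Require Import Defs.
From HB Require Import structures.
From mathcomp Require Import all_boot all_order all_algebra.
From mathcomp Require Import all_classical all_reals all_analysis.
From mathcomp Require Import lra zify.
Set Implicit Arguments. Unset Strict Implicit. Unset Printing Implicit Defensive.
Import Order.TTheory GRing.Theory Num.Theory.
Local Open Scope classical_set_scope.
Local Open Scope ring_scope.

Section G.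
Context {R : realType}.
Definition UCo {U V : pseudoMetricType R} (g : U -> V) :=
  forall e, 0 < e -> exists2 d, 0 < d & forall a b, ball a d b -> ball (g a) e (g b).
Lemma heine (U V : pseudoMetricType R) (g : U -> V) :
  compact [set: U] -> continuous g -> UCo g.
Proof.
move=> /compact_near_coveringP cpt cg e e0.
have e20 : 0 < e / 2 by rewrite divr_gt0.
have H : \forall d \near (0:R)^'+, [set: U] `<=` (fun a => forall b, ball a d b -> ball (g a) e (g b)).
  apply: cpt => a _.
  have /nbhs_ballP [r /= r0 Hr] : nbhs a (g @^-1` ball (g a) (e/2)).
    by apply: cg; apply: nbhsx_ballx.
  have r20 : 0 < r / 2 by rewrite divr_gt0.
  near=> x' d => b xb.
  have ax' : ball a (r/2) x' by near: x'; apply: nbhsx_ballx.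
  have d2 : d <= r/2 by near: d; apply: nbhs_right_ltW.
  have rr : r / 2 <= r by lra.
  have ab : ball a r b.
    by apply: (@ball_split _ _ x') => //; apply: le_ball xb.
  apply: (@ball_splitr _ _ (g a)); first exact: Hr (le_ball rr ax').
  exact: Hr.
have : \forall d \near (0:R)^'+, 0 < d /\ (forall a b, ball a d b -> ball (g a) e (g b)).
  near=> d; split; first by near: d; apply: nbhs_right_gt.
  by move=> a b; apply: (near H d).
move=> /filter_ex [d [d0 Hd]]; by exists d.
Unshelve. all: by end_near.
Qed.

Lemma ball_eqM (T : metricType R) (a b : T) :
  (forall e, 0 < e -> ball a e b) -> a = b.
Proof.
move=> H; apply: mdist_positivity; apply/eqP; rewrite eq_le mdist_ge0 andbT.
rewrite leNgt; apply/negP => d0; have := H _ d0; rewrite ballEmdist /= ltxx.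
by [].
Qed.

Lemma UCo_id (U : pseudoMetricType R) : UCo (@id U).
Proof. by move=> e e0; exists e. Qed.

Lemma UCo_cst (U V : pseudoMetricType R) (c : V) : UCo (fun _ : U => c).
Proof. by move=> e e0; exists 1 => // a b _; apply: ballxx. Qed.

Lemma UCo_comp (U V W : pseudoMetricType R) (g : U -> V) (h : V -> W) :
  UCo g -> UCo h -> UCo (h \o g).
Proof.
move=> ug uh e e0; have [d1 d10 H1] := uh e e0; have [d2 d20 H2] := ug d1 d10.
by exists d2 => // a b ab; apply/H1/H2.
Qed.

Lemma UC_fin (U : pseudoMetricType R) (V : nat -> pseudoMetricType R)
  (h : forall n, U -> V n) : (forall n, UCo (h n)) ->
  forall N e, 0 < e -> exists2 d, 0 < d & forall a b, ball a d b ->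
    forall n, (n <= N)%N -> ball (h n a) e (h n b).
Proof.
move=> uh; elim=> [|N IH] e e0.
  have [d d0 H] := uh 0%N e e0; exists d => // a b ab n.
  by rewrite leqn0 => /eqP ->; apply: H.
have [d1 d10 H1] := IH e e0; have [d2 d20 H2] := uh N.+1 e e0.
exists (Num.min d1 d2); first by rewrite lt_min d10.
move=> a b ab n; rewrite leq_eqVlt ltnS => /orP [/eqP -> | nN].
  by apply: H2; apply: le_ball ab; rewrite ge_min lexx orbT.
by apply: H1 => //; apply: le_ball ab; rewrite ge_min lexx.
Qed.

Section chains.
Variables (Y : pseudoMetricType R) (S : set Y) (g : Y -> Y).

Lemma dchain_cat d a b c : dchain S g d a b -> dchain S g d b c -> dchain S g d a c.
Proof.
move=> [k1 [k10 [s1 [s10 s1k s1S s1b]]]].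
move=> [k2 [k20 [s2 [s20 s2k s2S s2b]]]].
exists (k1 + k2)%N; split; first by rewrite addn_gt0 k10.
exists (fun i => if (i <= k1)%N then s1 i else s2 (i - k1)%N); split.
- by rewrite leq0n.
- have -> : (k1 + k2 <= k1)%N = false by apply/negbTE; rewrite -ltnNge; lia.
  by rewrite addKn.
- move=> i ik; case: ifP => hi; first exact: s1S.
  by apply: s2S; rewrite leq_subLR.
- move=> i ik; case: (ltngtP i k1) => hi.
  + by apply: s1b.
  + rewrite subSn; last exact: ltnW.
    by apply: s2b; lia.
  + subst i; rewrite subSnn s1k -s20.
    by apply: s2b.
Qed.

Lemma chain_equiv_sym a b : chain_equiv S g a b -> chain_equiv S g b a.
Proof.
by move=> [ha hb H]; split => // e e0; have [? ?] := H e e0; split.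
Qed.

Lemma chain_equiv_trans a b c :
  chain_equiv S g a b -> chain_equiv S g b c -> chain_equiv S g a c.
Proof.
move=> [ha hb H1] [_ hc H2]; split => // e e0.
have [? ?] := H1 e e0; have [? ?] := H2 e e0.
by split; apply: dchain_cat; eassumption.
Qed.

Lemma chain_equiv_refl a : chain_rec S g a -> chain_equiv S g a a.
Proof. by move=> [Sa H]; split => // e e0; split; apply: H. Qed.

End chains.

Lemma dchain_map (Y1 Y2 : pseudoMetricType R) (S1 : set Y1) (S2 : set Y2)
  (g1 : Y1 -> Y1) (g2 : Y2 -> Y2) (h : Y1 -> Y2) d1 d2 a b :
  (forall y, S1 y -> S2 (h y)) ->
  (forall u v, ball (g1 u) d1 v -> ball (g2 (h u)) d2 (h v)) ->
  dchain S1 g1 d1 a b -> dchain S2 g2 d2 (h a) (h b).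
Proof.
move=> hS hb [k [k0 [s [s0 sk sS sb]]]]; exists k; split => //.
exists (h \o s); split => /=.
- by rewrite s0.
- by rewrite sk.
- by move=> i ik; apply/hS/sS.
- by move=> i ik; apply/hb/sb.
Qed.

Lemma class_closed (Y : pseudoMetricType R) (g : Y -> Y) c z : continuous g ->
  (forall e, 0 < e -> exists z', chain_equiv setT g c z' /\ ball z e z') ->
  chain_equiv setT g c z.
Proof.
move=> cg H.
have cz : forall d, 0 < d -> dchain setT g d c z.
  move=> d d0; have d20 : 0 < d / 2 by rewrite divr_gt0.
  have [z' [[_ _ Hc] zz']] := H _ d20; have [[k [k0 [s [s0 sk _ sb]]]] _] := Hc _ d20.
  exists k; split => //; exists (fun i => if i == k then z else s i); split => //.
  - by case: eqP => [k0'|//]; rewrite -k0' in k0.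
  - by rewrite eqxx.
  - move=> i ik; rewrite ltn_eqF //; case: eqP => hi.
      subst k; apply: (@ball_split _ _ z'); first by rewrite -sk; apply: sb.
      exact: ball_sym.
    by apply: le_ball (sb _ ik); lra.
have zc : forall d, 0 < d -> dchain setT g d z c.
  move=> d d0; have d20 : 0 < d / 2 by rewrite divr_gt0.
  have /nbhs_ballP [r /= r0 Hr] : nbhs z (g @^-1` ball (g z) (d/2)).
    by apply: cg; apply: nbhsx_ballx.
  have [z' [[_ _ Hc] zz']] := H _ r0; have [_ [k [k0 [s [s0 sk _ sb]]]]] := Hc _ d20.
  exists k; split => //; exists (fun i => if i == 0%N then z else s i); split => //.
  - by case: eqP => [k0'|//]; rewrite k0' in k0.
  - move=> i ik /=; case: eqP => hi.
      subst i; apply: (@ball_split _ _ (g z')); first exact: Hr.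
      by rewrite -s0; apply: sb.
    by apply: le_ball (sb _ ik); lra.
have [z' [[hc _ _] _]] := H _ ltr01.
split => //; last by move=> e e0; split; [apply: cz|apply: zc].
by split => // e e0; apply: dchain_cat (zc _ e0) (cz _ e0).
Qed.

End G.

Unset Implicit Arguments.
Section Main.
Variables (R : realType) (X : nat -> metricType R) (f : forall n, X n -> X n)
  (pi : forall n, X n.+1 -> X n).
Hypotheses (hcpt : forall n, compact [set: X n])
  (hf : forall n : nat, continuous (f n)) (hpi : forall n : nat, continuous (pi n))
  (heq : forall n, f n \o pi n = pi n \o f n.+1).
Local Notation P := (prod_topology X).
Local Notation F := (lim_map f).
Local Notation IL := (inv_lim pi).
Lemma proj_ent n (e : R) : 0 < e ->
  @entourage P [set xy | ball (xy.1 n) e (xy.2 n)].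
Proof.
move=> e0.
rewrite /entourage /= /sup_ent /= smallest_filter_finI.
move=> F [_ GF]; apply: GF => /=.
pose p : {classic nat} * set (P * P) := (n, [set xy | ball (xy.1 n) e (xy.2 n)]).
suff /asboolP entE : @entourage (initial_topology (@proj _ X n)) p.2.
  by exists (exist _ p entE).
exists [set xy | ball xy.1 e xy.2]; first exact: (entourage_ball _ (PosNum e0)).
by case=> a b /=.
Qed.

Lemma projB n e : 0 < e ->
  exists2 d, 0 < d & forall u v : P, ball u d v -> ball (u n) e (v n).
Proof.
move=> e0; have := proj_ent n e e0; rewrite -entourage_ballE => -[d /= d0 H].
by exists d => // u v uv; exact: (H (u, v)).
Qed.

Definition closeN (N : nat) (h : R) (u v : P) :=
  forall n, (n <= N)%N -> ball (u n) h (v n).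

Definition Gfil (A : set (P * P)) :=
  exists N, exists2 h, 0 < h & forall u v, closeN N h u v -> A (u, v).

Lemma Gfil_filter : Filter Gfil.
Proof.
split.
- by exists 0%N; exists 1.
- move=> A B [N1 [h1 h10 H1]] [N2 [h2 h20 H2]].
  exists (maxn N1 N2); exists (Num.min h1 h2); first by rewrite lt_min h10.
  move=> u v uv; split.
    apply: H1 => n nN; apply: le_ball (uv n _); first by rewrite ge_min lexx.
    by rewrite leq_max nN.
  apply: H2 => n nN; apply: le_ball (uv n _); first by rewrite ge_min lexx orbT.
  by rewrite leq_max nN orbT.
- move=> A B AB [N [h h0 H]]; exists N; exists h => // u v uv.
  exact/AB/H.
Qed.

Lemma prodA e : 0 < e -> exists N, exists2 h, 0 < h &
  forall u v : P, closeN N h u v -> ball u e v.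
Proof.
move=> e0; have := entourage_ball P (PosNum e0).
rewrite /entourage /= /sup_ent /= smallest_filter_finI => /(_ Gfil).
case.
- split; first exact: Gfil_filter.
  move=> _ [[[i A] /= /asboolP [V entV VA]] _ <-] /=.
  move: entV; rewrite -entourage_ballE => -[h /= h0 hV].
  exists i; exists h => // u v uv; apply: VA; apply: (hV (u i, v i)).
  exact: uv.
- move=> N [h h0 H]; exists N; exists h => // u v uv; exact: (H u v uv).
Qed.

Lemma UCo_proj n : UCo (fun u : P => u n).
Proof. by move=> e e0; have [d d0 H] := projB n e e0; exists d. Qed.

Lemma UCo_prod (U : pseudoMetricType R) (h : U -> P) :
  (forall n, UCo (fun a => h a n)) -> UCo h.
Proof.
move=> uh e e0; have [N [eta eta0 H]] := prodA e e0.
have [d d0 Hd] := UC_fin (h := fun n a => h a n) uh N eta0.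
by exists d => // a b ab; apply: H => n nN; apply: Hd.
Qed.

Lemma UCo_F : UCo F.
Proof.
apply: UCo_prod => n.
exact: (UCo_comp (UCo_proj n) (heine (hcpt n) (hf n))).
Qed.

Lemma UCo_pi n : UCo (pi n).
Proof. exact: heine (hcpt n.+1) (hpi n). Qed.

Fixpoint lift (d : P) (m : nat) : X m -> P :=
  match m return X m -> P with
  | 0 => fun z => dfwith d 0%N z
  | m'.+1 => fun z => dfwith (lift d m' (pi m' z)) m'.+1 z
  end.

Lemma dfwith_id (g : P) i : dfwith g i (g i) = g.
Proof. by apply: functional_extensionality_dep => j; case: dfwithP. Qed.

Lemma lift_out d m z n : (m < n)%N -> lift d m z n = d n.
Proof.
elim: m z => [|m IH] z /= mn; first by rewrite dfwithout //; lia.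
by rewrite dfwithout ?IH //; lia.
Qed.

Lemma lift_top d m z : lift d m z m = z.
Proof. by case: m z => [|m] z /=; rewrite dfwithin. Qed.

Lemma lift_cons d m z n : (n < m)%N -> pi n (lift d m z n.+1) = lift d m z n.
Proof.
elim: m z => [//|m IH] z /=; rewrite ltnS leq_eqVlt => /orP [/eqP -> | nm].
  by rewrite dfwithin dfwithout ?lift_top //; lia.
by rewrite !dfwithout ?IH //; lia.
Qed.

Lemma lift_def d d' m z n : (n <= m)%N -> lift d m z n = lift d' m z n.
Proof.
elim: m z => [|m IH] z /=.
  by rewrite leqn0 => /eqP ->; rewrite !dfwithin.
rewrite leq_eqVlt => /orP [/eqP -> | nm]; first by rewrite !dfwithin.
by rewrite !dfwithout ?IH //; lia.
Qed.

Lemma lift_x x m : IL x -> lift x m (x m) = x.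
Proof.
move=> hx; elim: m => [|m IH] /=; first exact: dfwith_id.
by rewrite hx IH dfwith_id.
Qed.

Lemma lift_x_le d x m n : IL x -> (n <= m)%N -> lift d m (x m) n = x n.
Proof. by move=> hx nm; rewrite (lift_def d x m (x m) n nm) lift_x. Qed.

Lemma lift_f d m z n : (n <= m)%N -> f n (lift d m z n) = lift d m (f m z) n.
Proof.
elim: m z n => [|m IH] z n /=.
  by rewrite leqn0 => /eqP ->; rewrite !dfwithin.
rewrite leq_eqVlt => /orP [/eqP -> | nm]; first by rewrite !dfwithin.
rewrite !dfwithout; [|lia|lia]; rewrite IH; last by lia.
by congr (lift d m _ n); exact: (congr1 (fun h => h z) (heq m)).
Qed.

Lemma UCo_lift d m n : UCo (fun z => lift d m z n).
Proof.
elim: m n => [|m IH] n /=.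
  have [e|ne] := eqVneq n 0%N.
    by subst n => e e0; exists e => // a b ab; rewrite !dfwithin.
  by move=> e e0; exists 1 => // a b _; rewrite !dfwithout 1?eq_sym //; apply: ballxx.
have [e|ne] := eqVneq n m.+1.
  by subst n => e e0; exists e => // a b ab; rewrite !dfwithin.
move=> e e0; have [dd dd0 H] := UCo_comp (UCo_pi m) (IH n) e0.
by exists dd => // a b ab; rewrite !dfwithout 1?eq_sym //; apply: H.
Qed.

Lemma lift_in (C : forall n, set (X n)) (hC : forall n, pi n @` C n.+1 `<=` C n)
  d m z n : C m z -> (n <= m)%N -> C n (lift d m z n).
Proof.
elim: m z n => [|m IH] z n Cz /=.
  by rewrite leqn0 => /eqP e; subst n; rewrite dfwithin.
rewrite leq_eqVlt => /orP [/eqP e | nm]; first by subst n; rewrite dfwithin.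
rewrite dfwithout; last by lia.
by apply: IH => //; apply: hC; exists z.
Qed.


Lemma P_compact : compact [set: P].
Proof.
have -> : [set: P] = [set g : P | forall i, [set: X i] (g i)].
  by apply/seteqP; split.
apply: (@tychonoff _ (fun i => X i : topologicalType) (fun i => [set: X i])) => i.
exact: hcpt.
Qed.

Lemma cluster_IL (q : nat -> P) :
  (forall j n, (n < j)%N -> pi n (q j n.+1) = q j n) ->
  exists p, IL p /\ forall e, 0 < e -> forall J, exists2 j, (J <= j)%N & ball p e (q j).
Proof.
move=> hq.
have [p [_ clp]] := P_compact (q @ \oo) _ (filterT).
have nearp : forall e, 0 < e -> forall J, exists2 j, (J <= j)%N & ball p e (q j).
  move=> e e0 J.
  have [u [[j Jj <-] bu]] := clp (q @` [set j | (J <= j)%N]) (ball p e)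
    (ex_intro2 _ _ J I (fun j Jj => ex_intro2 _ _ j Jj erefl)) (nbhsx_ballx p e e0).
  by exists j.
exists p; split => // n; apply: ball_eqM => e e0.
have e20 : 0 < e / 2 by rewrite divr_gt0.
have /nbhs_ballP [r /= r0 Hr] : nbhs (p n.+1) (pi n @^-1` ball (pi n (p n.+1)) (e/2)).
  by apply: hpi; apply: nbhsx_ballx.
have [d1 d10 H1] := projB n.+1 r r0.
have [d2 d20 H2] := projB n (e/2) e20.
have dm0 : 0 < Num.min d1 d2 by rewrite lt_min d10.
have [j nj pj] := nearp (Num.min d1 d2) dm0 n.+1.
apply: (@ball_splitl _ _ (q j n)).
  rewrite -(hq j n nj); apply: Hr; apply: H1; apply: le_ball pj.
  by rewrite ge_min lexx.
by apply: H2; apply: le_ball pj; rewrite ge_min lexx orbT.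
Qed.

Lemma Kclose rho : 0 < rho -> exists m0, forall u : P,
  (forall n, (n < m0)%N -> pi n (u n.+1) = u n) -> exists w, IL w /\ ball u rho w.
Proof.
move=> r0; apply: contrapT => H.
have H' : forall m0, exists u : P, (forall n, (n < m0)%N -> pi n (u n.+1) = u n)
    /\ forall w, IL w -> ~ ball u rho w.
  move=> m0; apply: contrapT => Hn; apply: H; exists m0 => u hu.
  apply: contrapT => Hw; apply: Hn; exists u; split => // w Lw bw.
  by apply: Hw; exists w.
have [q hq] := choice H'.
have [p [Lp np]] := cluster_IL q (fun j n nj => (hq j).1 n nj).
have [j _ pj] := np rho r0 0%N.
by apply: ((hq j).2 p Lp); apply: ball_sym.
Qed.

Lemma thread_nonempty C : C_pi f pi C -> exists x, thread_set pi C x.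
Proof.
move=> [hc hC].
have hex : forall n, exists y : X n, C n y.
  move=> n; have [y [cy ->]] := hc n; exists y.
  exact: chain_equiv_refl.
pose c : P := fun n => projT1 (cid (hex n)).
have cC : forall n, C n (c n) by move=> n; rewrite /c; case: cid.
pose q m := lift c m (c m).
have [p [Lp np]] := cluster_IL q (fun j n nj => lift_cons c j (c j) n nj).
exists p; split => // n.
have [y [cy Ceq]] := hc n; rewrite Ceq.
apply: class_closed; first exact: hf.
move=> e e0; have [d d0 Hd] := projB n e e0.
have [j nj pj] := np d d0 n.
exists (q j n); split; last exact: Hd.
have := lift_in C hC c j (c j) n (cC j) nj.
by rewrite Ceq.
Qed.

Lemma proj_chain x y : (forall d, 0 < d -> dchain IL F d x y) ->
  forall n e, 0 < e -> dchain setT (f n) e (x n) (y n).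
Proof.
move=> H n e e0; have [d d0 Hd] := projB n e e0.
have := @dchain_map R P (X n) IL setT F (f n) (fun u : P => u n) d e x y.
by apply; [by [] | move=> u v uv; exact: (Hd (F u) v uv) | exact: H].
Qed.

Lemma lift_chain x y : IL x -> IL y ->
  (forall n e, 0 < e -> dchain setT (f n) e (x n) (y n)) ->
  forall d, 0 < d -> dchain IL F d x y.
Proof.
move=> Lx Ly H de de0.
have d3 : 0 < de / 3 by rewrite divr_gt0.
have [r1 r10 Hr1] := UCo_F (de / 3) d3.
pose rho := Num.min r1 (de / 3).
have rho0 : 0 < rho by rewrite lt_min r10.
have rr1 : rho <= r1 by rewrite ge_min lexx.
have rd3 : rho <= de / 3 by rewrite ge_min lexx orbT.
have [m0 Hm0] := Kclose rho rho0.
have [N [eta eta0 HA]] := prodA (de / 3) d3.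
pose m := (m0 + N)%N.
have [kap kap0 Hk] := UC_fin (h := fun n a => lift x m a n) (fun n => UCo_lift x m n) N eta0.
have [k [k0 [z [z0 zk _ zb]]]] := H m kap kap0.
pose q i := lift x m (z i).
have qK : forall i n, (n < m0)%N -> pi n (q i n.+1) = q i n.
  by move=> i n nm; apply: lift_cons; rewrite /m; lia.
have wex : forall i, exists w, [/\ IL w, i != k -> ball (q i) rho w,
    ball (q i) (de / 3) w, (i = 0%N -> w = x) & (i = k -> w = y)].
  move=> i; have [ik|ik] := eqVneq i k.
    exists y; split => //; last by move=> i0; rewrite i0 in ik; rewrite -ik in k0.
    apply: HA => n nN; rewrite /q ik zk lift_x_le //; first exact: ballxx.
    by rewrite /m; lia.
  have [i0|i0] := eqVneq i 0%N.
    have qx : q 0%N = x by rewrite /q z0 lift_x.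
    exists x; rewrite i0 qx; split => //.
    - by move=> _; apply: ballxx.
    - exact: ballxx.
    - by move=> k0'; rewrite -k0' in k0.
  have [w [Lw bw]] := Hm0 (q i) (qK i).
  exists w; split => //; try (by move=> /eqP; rewrite (negbTE i0));
    try (by move=> /eqP; rewrite (negbTE ik)).
  exact: le_ball rd3 _ bw.
have [w hw] := choice wex.
exists k; split => //; exists w; split.
- by have [_ _ _ h _] := hw 0%N; apply: h.
- by have [_ _ _ _ h] := hw k; apply: h.
- by move=> i _; have [] := hw i.
- move=> i ik.
  have [_ b1 _ _ _] := hw i; have [_ _ b3 _ _] := hw i.+1.
  have h1 : ball (F (w i)) (de / 3) (F (q i)).
    apply: Hr1; apply: ball_sym; apply: (le_ball rr1); apply: b1.
    by rewrite neq_ltn ik.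
  have h2 : ball (F (q i)) (de / 3) (q i.+1).
    apply: HA => n nN; rewrite /lim_map /q lift_f; last by rewrite /m; lia.
    by apply: Hk => //; apply: zb.
  have -> : de = de / 3 + de / 3 + de / 3 by lra.
  exact: ball_triangle (ball_triangle h1 h2) b3.
Qed.

Lemma CR_char x :
  chain_rec IL F x <-> IL x /\ forall n, chain_rec setT (f n) (x n).
Proof.
split.
  move=> [Lx H]; split => // n; split => // e e0.
  exact: (proj_chain x x H n e e0).
move=> [Lx H]; split => //; apply: lift_chain => // n e e0.
by have [_ ] := H n; apply.
Qed.

Lemma CE_char x z : chain_equiv IL F x z <->
  [/\ IL x, IL z & forall n, chain_equiv setT (f n) (x n) (z n)].
Proof.
split.
  move=> [cx cz H]; have [Lx cxn] := (CR_char x).1 cx.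
  have [Lz czn] := (CR_char z).1 cz.
  split => // n; split => // e e0; split.
    by apply: proj_chain => // d d0; have [] := H d d0.
  by apply: proj_chain => // d d0; have [] := H d d0.
move=> [Lx Lz H]; split.
- apply/CR_char; split => // n; by have [] := H n.
- apply/CR_char; split => // n; by have [] := H n.
- move=> d d0; split; apply: lift_chain => // n e e0; have [_ _ h] := H n;
    by have [] := h e e0.
Qed.

Lemma pi_chain n a b e : 0 < e ->
  (forall d, 0 < d -> dchain setT (f n.+1) d a b) ->
  dchain setT (f n) e (pi n a) (pi n b).
Proof.
move=> e0 H; have [d d0 Hd] := UCo_pi n e e0.
have := @dchain_map R (X n.+1) (X n) setT setT (f n.+1) (f n) (pi n) d e a b.
apply; [by [] | move=> u v uv | exact: H].
have -> : f n (pi n u) = pi n (f n.+1 u) by exact: (congr1 (fun h => h u) (heq n)).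
exact: Hd.
Qed.

Lemma pi_equiv n a b : chain_equiv setT (f n.+1) a b ->
  chain_equiv setT (f n) (pi n a) (pi n b).
Proof.
move=> [[_ ca] [_ cb] H]; split.
- by split => // e e0; apply: pi_chain.
- by split => // e e0; apply: pi_chain.
- move=> e e0; split; apply: pi_chain => // d d0; by have [] := H d d0.
Qed.

Lemma main_eq :
  [set C | chain_component IL F C] =
  [set thread_set pi C | C in [set C | C_pi f pi C]].
Proof.
apply/seteqP; split.
- move=> C [y [cy ->]].
  have [Ly cyn] := (CR_char y).1 cy.
  exists (fun n => [set z | chain_equiv setT (f n) (y n) z]).
    split.
      by move=> n; exists (y n).
    move=> n _ [z hz <-] /=; rewrite -(Ly n); exact: pi_equiv.
  apply/seteqP; split => z.
    by move=> [Lz Hz]; apply/CE_char; split.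
  by move=> /CE_char [_ Lz Hz]; split.
- move=> _ [C hC <-].
  have [x [Lx xC]] := thread_nonempty C hC.
  have [hc _] := hC.
  have Ceq : forall n, C n = [set z | chain_equiv setT (f n) (x n) z].
    move=> n; have [c [cc Cn]] := hc n; have := xC n; rewrite Cn => /= cxn.
    apply/seteqP; split => z /= hz.
      exact: chain_equiv_trans (chain_equiv_sym cxn) hz.
    exact: chain_equiv_trans cxn hz.
  have cx : chain_rec IL F x.
    apply/CR_char; split => // n; have := xC n; rewrite Ceq.
    by case.
  exists x; split => //; apply/seteqP; split => z.
    by move=> [Lz Hz]; apply/CE_char; split => // n; have := Hz n; rewrite Ceq.
  by move=> /CE_char [_ Lz Hz]; split => // n; rewrite Ceq; exact: Hz.
Qed.

End Main.

Theorem lemma3p2 (R : realType) (X : nat -> metricType R)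
  (f : forall n, X n -> X n) (pi : forall n, X n.+1 -> X n)
  (hcpt : forall n, compact [set: X n])
  (hf : forall n, continuous (f n))
  (hpi : forall n, continuous (pi n))
  (heq : forall n, f n \o pi n = pi n \o f n.+1) :
  [set C | chain_component (inv_lim pi) (lim_map f) C] =
  [set thread_set pi C | C in [set C | C_pi f pi C]].
Proof. by apply: main_eq. Qed.
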